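(* Let $\mathbf{A}\in\mathbb{C}^{N\times N}$ be a nonzero matrix (the weighted adjacency matrix of a graph), and let $\lambda_{\max}$ denote an eigenvalue of $\mathbf{A}$ of largest magnitude, i.e. $|\lambda_{\max}|\ge|\lambda|$ for every eigenvalue $\lambda$ of $\mathbf{A}$. Let $\lambda_m,\lambda_n\in\mathbb{R}$ be two distinct real eigenvalues of $\mathbf{A}$ with corresponding eigenvectors $\mathbf{v}_m,\mathbf{v}_n$, normalized so that $\|\mathbf{v}_m\|_1=\|\mathbf{v}_n\|_1=1$. If $\lambda_m<\lambda_n$, then $\mathrm{TV}_G(\mathbf{v}_m)>\mathrm{TV}_G(\mathbf{v}_n)$.
   Context: For a graph signal $\mathbf{s}\in\mathbb{C}^N$, the total variation on the graph is $\mathrm{TV}_G(\mathbf{s})=\|\mathbf{s}-\mathbf{A}^{\mathrm{norm}}\mathbf{s}\|_1$, where $\mathbf{A}^{\mathrm{norm}}=\frac{1}{|\lambda_{\max}|}\mathbf{A}$ is the normalized adjacency matrix. *)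

(* Defs.v *)
(* The field of complex numbers is abstracted as an
   arbitrary numClosedFieldType C (e.g. algC, or complex R). *)
From HB Require Import structures.
From mathcomp Require Import all_boot all_order all_algebra.
Set Implicit Arguments. Unset Strict Implicit. Unset Printing Implicit Defensive.
Import Order.TTheory GRing.Theory Num.Theory.
Local Open Scope ring_scope.

Definition l1norm (C : numClosedFieldType) (N : nat) (v : 'cV[C]_N) : C :=
  \sum_(i < N) `|v i 0|.

Definition Anorm (C : numClosedFieldType) (N : nat) (A : 'M[C]_N) (lmax : C)
  : 'M[C]_N := (`|lmax|)^-1 *: A.

Definition TV (C : numClosedFieldType) (N : nat) (A : 'M[C]_N) (lmax : C)
  (s : 'cV[C]_N) : C := l1norm (s - Anorm A lmax *m s).

(* Main.v *)
Require Import Defs.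
From mathcomp Require Import all_boot all_order all_algebra.
Import Order.TTheory GRing.Theory Num.Theory.
Local Open Scope ring_scope.
Lemma eig_tr (F : fieldType) n (A : 'M[F]_n) a : eigenvalue A^T a = eigenvalue A a.
Proof.
rewrite /eigenvalue /eigenspace !kermx_eq0 /row_free.
have -> : A^T - a%:M = (A - a%:M)^T :> 'M_n by rewrite linearB /= tr_scalar_mx.
by rewrite mxrank_tr.
Qed.
Lemma eig_col (F : fieldType) n (A : 'M[F]_n) a (v : 'cV_n) : A *m v = a *: v -> v != 0 -> eigenvalue A a.
Proof.
move=> Hv v0; rewrite -eig_tr; apply/eigenvalueP; exists v^T.
  by rewrite -trmx_mul Hv linearZ.
by rewrite trmx_eq0.
Qed.

Lemma TV_eig (C : numClosedFieldType) (N : nat) (A : 'M[C]_N) (lmax l : C) (v : 'cV[C]_N) :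
  A *m v = l *: v -> TV A lmax v = `|1 - l / `|lmax| | * l1norm v.
Proof.
move=> Hv; rewrite /TV /Anorm -scalemxAl Hv scalerA -{1}(scale1r v) -scalerBl.
rewrite /l1norm mulr_sumr; apply: eq_bigr => i _; rewrite mxE normrM mulrC.
by rewrite [l / _]mulrC mulrC.
Qed.

Lemma l1_nz (C : numClosedFieldType) (N : nat) (v : 'cV[C]_N) : l1norm v = 1 -> v != 0.
Proof.
move=> H; apply/eqP => v0; move: H; rewrite v0 /l1norm big1 => [|i _]; last by rewrite mxE normr0.
by move/eqP; rewrite eq_sym oner_eq0.
Qed.

Theorem theorem1 (C : numClosedFieldType) (N : nat) (A : 'M[C]_N) (lmax : C)
  (lm ln : C) (vm vn : 'cV[C]_N) :
  A != 0 ->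
  eigenvalue A lmax ->
  (forall l : C, eigenvalue A l -> `|l| <= `|lmax|) ->
  lm \is Num.real -> ln \is Num.real ->
  A *m vm = lm *: vm -> A *m vn = ln *: vn ->
  l1norm vm = 1 -> l1norm vn = 1 ->
  lm < ln ->
  TV A lmax vn < TV A lmax vm.
Proof.
move=> _ _ Hmax rm rn Em En Nm Nn lt.
have hm := Hmax _ (@eig_col C N A lm vm Em (@l1_nz C N vm Nm)).
have hn := Hmax _ (@eig_col C N A ln vn En (@l1_nz C N vn Nn)).
rewrite (@TV_eig C N A lmax lm vm Em) (@TV_eig C N A lmax ln vn En) Nm Nn !mulr1.
set M := `|lmax| in hm hn *.
have M0 : 0 < M.
  rewrite lt0r normr_ge0 andbT; apply/eqP => M0.
  move: hm hn; rewrite M0 !normr_le0 => /eqP e1 /eqP e2.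
  by move: lt; rewrite e1 e2 ltxx.
have g0 : forall l, l \is Num.real -> `|l| <= M -> 0 <= 1 - l / M.
  move=> l rl hl; rewrite subr_ge0 ler_pdivrMr // mul1r.
  exact: le_trans (real_ler_norm rl) hl.
rewrite !ger0_norm ?g0 //.
by rewrite ltrD2l ltrN2 ltr_pM2r ?invr_gt0.
Qed.
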